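(* Let $D$ be a strong nonseparable digraph, let $H$ be a strong nonseparable subdigraph of $D$, and let $P=(x_0,x_1,\ldots,x_{r-1},x_r)$ be an ear of $H$ in $D$ with length $l(P)=r\geq 2$. If $H$ has no kernel and $H'=H\cup P$ has a kernel $N'$, then one of the following holds: (1) $x_0\notin N'$, $x_r\in N'$ and $l(P)$ is odd; (2) $x_0,x_r\notin N'$ and $l(P)$ is even.
   Context: All digraphs are finite, without loops or multiple arcs. Paths and cycles are directed; the length of a path is its number of arcs. A digraph is strong if for every ordered pair of vertices $x,y$ there is a directed path from $x$ to $y$; it is nonseparable if its underlying undirected graph is nonseparable (has no cut vertex). For a subdigraph $H$ of $D$, an ear of $H$ in $D$ is a directed path $(x_0,\ldots,x_r)$ in $D$ whose end vertices $x_0,x_r$ lie in $H$ and whose internal vertices $x_1,\ldots,x_{r-1}$ do not lie in $H$ (or a directed cycle with exactly one vertex $x_0=x_r$ in $H$). A kernel of a digraph is a set $N$ of vertices that is independent (no arc between two of its vertices) and absorbent (every vertex not in $N$ has an out-neighbour in $N$). *)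

(* Defs.v *)
From mathcomp Require Import all_boot.
Set Implicit Arguments. Unset Strict Implicit. Unset Printing Implicit Defensive.

(* A digraph is a loopless arc relation [e : rel T] on a finite vertex type T.
   A (sub)digraph is represented by a vertex set [V : {set T}] and an arc
   relation [A : rel T] whose arcs join vertices of V. *)

Definition arcs_in (T : finType) (V : {set T}) (A : rel T) : rel T :=
  [rel x y | [&& x \in V, y \in V & A x y]].

Definition subdigraph (T : finType) (e : rel T) (VH : {set T}) (AH : rel T) :=
  forall x y, AH x y -> [&& x \in VH, y \in VH & e x y].

Definition strong (T : finType) (V : {set T}) (A : rel T) :=
  forall x y, x \in V -> y \in V -> connect (arcs_in V A) x y.

Definition und_connected (T : finType) (W : {set T}) (A : rel T) :=
  forall x y, x \in W -> y \in W ->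
    connect [rel a b | [&& a \in W, b \in W & A a b || A b a]] x y.

Definition nonseparable (T : finType) (V : {set T}) (A : rel T) :=
  und_connected V A /\ forall v, v \in V -> und_connected (V :\ v) A.

Definition kernel (T : finType) (V : {set T}) (A : rel T) (N : {set T}) :=
  [/\ N \subset V,
      (forall x y, x \in N -> y \in N -> ~~ A x y) &
      (forall x, x \in V -> x \notin N -> exists2 y, y \in N & A x y)].

(* (x 0, ..., x r) is an ear of H = (VH, AH) in D = (T, e): a directed path
   of D (or a directed cycle when x 0 = x r) whose end vertices lie in H and
   whose internal vertices do not lie in H *)
Definition ear (T : finType) (e : rel T) (VH : {set T}) (x : nat -> T) (r : nat) :=
  [/\ (forall i, i < r -> e (x i) (x i.+1)),
      (forall i j, i < j <= r -> x i = x j -> i = 0 /\ j = r),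
      x 0 \in VH, x r \in VH &
      (forall i, 0 < i < r -> x i \notin VH)].

Definition union_V (T : finType) (VH : {set T}) (x : nat -> T) (r : nat) : {set T} :=
  VH :|: [set x (nat_of_ord i) | i : 'I_r.+1].
Definition union_A (T : finType) (AH : rel T) (x : nat -> T) (r : nat) : rel T :=
  [rel a b | AH a b || [exists i : 'I_r, (a == x i) && (b == x i.+1)]].

(* Main.v *)
Require Import Defs.
From mathcomp Require Import all_boot.

Theorem mainTheorem5 (T : finType) (e : rel T) (VH : {set T}) (AH : rel T)
    (x : nat -> T) (r : nat) (N' : {set T}) :
  irreflexive e ->
  strong [set: T] e -> nonseparable [set: T] e ->
  subdigraph e VH AH -> strong VH AH -> nonseparable VH AH ->
  ear e VH x r -> 2 <= r ->
  ~ (exists N, kernel VH AH N) ->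
  kernel (union_V VH x r) (union_A AH x r) N' ->
  (x 0 \notin N' /\ x r \in N' /\ odd r) \/
  (x 0 \notin N' /\ x r \notin N' /\ ~~ odd r).
Proof.
move=> _ _ _ sub _ _ [earc einj x0V xrV xint] r2 noK [N'sub N'ind N'abs].
have inU : forall i, i <= r -> x i \in union_V VH x r.
  move=> i ir; rewrite /union_V; apply/setUP; right; apply/imsetP.
  have ir' : i < r.+1 by rewrite ltnS.
  by exists (Ordinal ir').
have arcP : forall i, i < r -> union_A AH x r (x i) (x i.+1).
  move=> i ir; rewrite /union_A /=; apply/orP; right; apply/existsP.
  by exists (Ordinal ir); rewrite /= !eqxx.
have inj : forall i j, 0 < i < r -> j <= r -> x i = x j -> i = j.
  move=> i j /andP[i0 ir] jr h; case: (ltngtP i j) => // c.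
  - have [] := einj i j _ h; first by rewrite c jr.
    by move=> iz; rewrite iz in i0.
  - have [] := einj j i _ (esym h); first by rewrite c (ltnW ir).
    by move=> _ ir'; rewrite ir' ltnn in ir.
have key : (x 0 \notin N') && (x 1 \in N').
  apply/negPn/negP => nk; apply: noK; exists (N' :&: VH); split.
  - exact: subsetIr.
  - move=> a b /setIP[aN _] /setIP[bN _]; apply/negP => ab.
    by have := N'ind a b aN bN; rewrite /union_A /= ab.
  - move=> v vV; rewrite inE vV andbT => vN.
    have vU : v \in union_V VH x r by rewrite /union_V inE vV.
    have [y yN] := N'abs v vU vN.
    rewrite /union_A /= => /orP[vy|/existsP[[j jr] /andP[/eqP vj /eqP yj]]].
    + exists y => //; rewrite inE yN; by have /and3P[] := sub _ _ vy.
    + simpl in vj, yj; case: j jr vj yj => [|j] jr vj yj.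
      * by exfalso; move/negP: nk; apply; rewrite -vj -yj; apply/andP; split.
      * by exfalso; have := xint j.+1 jr; rewrite -vj vV.
case/andP: key => k0 k1.
have alt : forall i, 0 < i <= r -> (x i \in N') = odd i.
  elim=> [|i IH] //; move=> /andP[_ ir]; case: i IH ir => [|i] IH ir.
    by rewrite k1.
  have IH' := IH (ltnW ir).
  rewrite oddS -IH'.
  case: (boolP (x i.+1 \in N')) => hk.
  - apply/negbTE/negP => hk1; have := N'ind _ _ hk hk1; by rewrite arcP.
  - have [y yN] := N'abs (x i.+1) (inU i.+1 (ltnW ir)) hk.
    rewrite /union_A /= => /orP[ay|/existsP[[j jr]/andP[/eqP kj /eqP yj]]].
    + exfalso; have /and3P[kV _ _] := sub _ _ ay.
      by move: kV; rewrite (negbTE (xint i.+1 ir)).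
    + simpl in kj, yj.
      have jk : i.+1 = j by apply: inj => //; apply: ltnW.
      by rewrite yj -jk in yN.
have hr : (x r \in N') = odd r by apply: alt; rewrite leqnn andbT (ltnW r2).
case: (boolP (odd r)) => o; [left|right]; rewrite hr o; by split.
Qed.
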